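(* Let $\Gamma_1$ and $\Gamma_2$ be two metric theories built over a finite alphabet $\mathcal{A}$. Then $\Gamma_1$ and $\Gamma_2$ are strongly equivalent if and only if $\Gamma_1$ and $\Gamma_2$ are MHT-equivalent (i.e. have exactly the same MHT models).
   Context: Write $[m,n)=\{i\in\mathbb{N}\mid m\le i<n\}$, $(m,n]=\{i\in\mathbb{N}\mid m<i\le n\}$. Metric formulas over $\mathcal{A}$: $\varphi::=p\mid\bot\mid\varphi_1\wedge\varphi_2\mid\varphi_1\vee\varphi_2\mid\varphi_1\to\varphi_2\mid\bullet_I\varphi\mid\varphi_1\mathsf{S}_I\varphi_2\mid\varphi_1\mathsf{T}_I\varphi_2\mid\circ_I\varphi\mid\varphi_1\mathsf{U}_I\varphi_2\mid\varphi_1\mathsf{R}_I\varphi_2$, $p\in\mathcal{A}$, $I=[m,n)$ with $m\in\mathbb{N}$, $n\in\mathbb{N}\cup\{\omega\}$; a metric theory is a (possibly infinite) set of metric formulas. A timed HT-trace of length $\lambda\in\mathbb{N}\cup\{\omega\}$ is $\mathbf{M}=(\langle\mathbf{H},\mathbf{T}\rangle,\tau)$ with $H_i\subseteq T_i\subseteq\mathcal{A}$ for $i\in[0,\lambda)$ and $\tau:[0,\lambda)\to\mathbb{N}$, $\tau(0)=0$, $\tau(i)\le\tau(i+1)$. Standing assumption: all timed traces are strict, i.e. $\tau(i)<\tau(i+1)$ whenever $i+1<\lambda$. Satisfaction at $k\in[0,\lambda)$: $\bot$ never; $p$ iff $p\in H_k$; $\wedge,\vee$ as usual; $\varphi\to\psi$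 iff for both $\mathbf{M}'=\mathbf{M}$ and $\mathbf{M}'=(\langle\mathbf{T},\mathbf{T}\rangle,\tau)$, $\mathbf{M}',k\not\models\varphi$ or $\mathbf{M}',k\models\psi$; $\bullet_I\varphi$ iff $k>0$, $\mathbf{M},k-1\models\varphi$, $\tau(k)-\tau(k-1)\in I$; $\varphi\mathsf{S}_I\psi$ iff for some $j\in[0,k]$ with $\tau(k)-\tau(j)\in I$, $\mathbf{M},j\models\psi$ and $\mathbf{M},i\models\varphi$ for all $i\in(j,k]$; $\varphi\mathsf{T}_I\psi$ iff for all $j\in[0,k]$ with $\tau(k)-\tau(j)\in I$, $\mathbf{M},j\models\psi$ or $\mathbf{M},i\models\varphi$ for some $i\in(j,k]$; $\circ_I\varphi$ iff $k+1<\lambda$, $\mathbf{M},k+1\models\varphi$, $\tau(k+1)-\tau(k)\in I$; $\varphi\mathsf{U}_I\psi$ iff for some $j\in[k,\lambda)$ with $\tau(j)-\tau(k)\in I$, $\mathbf{M},j\models\psi$ and $\mathbf{M},i\models\varphi$ for all $i\in[k,j)$; $\varphi\mathsf{R}_I\psi$ iff for all $j\in[k,\lambda)$ with $\tau(j)-\tau(k)\in I$, $\mathbf{M},j\models\psi$ or $\mathbf{M},i\models\varphi$ for some $i\in[k,j)$. An MHT model of a theory $\Gamma$ is a timed HT-trace $\mathbf{M}$ (of any length) with $\mathbf{M},0\models\varphi$ for all $\varphi\in\Gamma$; $\mathrm{MHT}(\Gamma)$ is the set of them. A total trace $(\langle\mathbf{T},\mathbf{T}\rangle,\tau)\in\mathrm{MHT}(\Gamma)$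 is a metric equilibrium model of $\Gamma$ if there is no $\mathbf{H}<\mathbf{T}$ (i.e. $H_i\subseteq T_i$ for all $i$ and $\mathbf{H}\neq\mathbf{T}$) with $(\langle\mathbf{H},\mathbf{T}\rangle,\tau)\in\mathrm{MHT}(\Gamma)$; $\mathrm{MEL}(\Gamma)$ denotes the set of these. $\Gamma_1,\Gamma_2$ are strongly equivalent if $\mathrm{MEL}(\Gamma_1\cup\Delta)=\mathrm{MEL}(\Gamma_2\cup\Delta)$ for every metric theory $\Delta$. *)

(* Defs.v *)
From mathcomp Require Import all_boot.
Set Implicit Arguments.
Unset Strict Implicit.
Unset Printing Implicit Defensive.

(* Extended naturals N ∪ {ω}: [Some n] is n, [None] is ω. *)
Definition enat := option nat.

Definition lt_enat (i : nat) (l : enat) : Prop :=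
  match l with Some n => i < n | None => True end.

Record interval := Intv { ilo : nat; ihi : enat }.

Definition in_intv (I : interval) (d : nat) : Prop :=
  ilo I <= d /\ lt_enat d (ihi I).

Section Formulas.
Variable A : finType.

Inductive mformula : Type :=
| MAtom of A
| MBot
| MAnd of mformula & mformula
| MOr of mformula & mformula
| MImp of mformula & mformula
| MPrev of interval & mformula
| MSince of interval & mformula & mformula
| MTrigger of interval & mformula & mformula
| MNext of interval & mformula
| MUntil of interval & mformula & mformula
| MRelease of interval & mformula & mformula .

Definition theory := mformula -> Prop.

Definition tunion (G D : theory) : theory := fun f => G f \/ D f.

(* Timed HT-trace (⟨H,T⟩, τ) of length λ; values at indices ≥ λ are irrelevant. *)
Record htrace := HTrace {
  tlen : enat;
  tH : nat -> {set A};
  tT : nat -> {set A};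
  ttau : nat -> nat }.

(* Well-formedness: λ ≥ 1 (so that τ(0) is defined), H_i ⊆ T_i on [0,λ),
   τ(0) = 0 and τ strictly increasing (standing strictness assumption). *)
Definition valid_trace (M : htrace) : Prop :=
  [/\ lt_enat 0 (tlen M),
      (forall i, lt_enat i (tlen M) -> tH M i \subset tT M i),
      ttau M 0 = 0 &
      (forall i, lt_enat i.+1 (tlen M) -> ttau M i < ttau M i.+1)].

Fixpoint msat (l : enat) (H T : nat -> {set A}) (tau : nat -> nat)
    (k : nat) (f : mformula) {struct f} : Prop :=
  match f with
  | MAtom p => p \in H k
  | MBot => False
  | MAnd f1 f2 => msat l H T tau k f1 /\ msat l H T tau k f2
  | MOr f1 f2 => msat l H T tau k f1 \/ msat l H T tau k f2
  | MImp f1 f2 =>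
      (msat l H T tau k f1 -> msat l H T tau k f2) /\
      (msat l T T tau k f1 -> msat l T T tau k f2)
  | MPrev J g =>
      0 < k /\ msat l H T tau k.-1 g /\ in_intv J (tau k - tau k.-1)
  | MSince J f1 f2 =>
      exists j, [/\ j <= k, in_intv J (tau k - tau j), msat l H T tau j f2 &
                   forall i, j < i -> i <= k -> msat l H T tau i f1]
  | MTrigger J f1 f2 =>
      forall j, j <= k -> in_intv J (tau k - tau j) ->
        msat l H T tau j f2 \/
        exists i, [/\ j < i, i <= k & msat l H T tau i f1]
  | MNext J g =>
      lt_enat k.+1 l /\ msat l H T tau k.+1 g /\ in_intv J (tau k.+1 - tau k)
  | MUntil J f1 f2 =>
      exists j, [/\ k <= j, lt_enat j l, in_intv J (tau j - tau k),
                   msat l H T tau j f2 &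
                   forall i, k <= i -> i < j -> msat l H T tau i f1]
  | MRelease J f1 f2 =>
      forall j, k <= j -> lt_enat j l -> in_intv J (tau j - tau k) ->
        msat l H T tau j f2 \/
        exists i, [/\ k <= i, i < j & msat l H T tau i f1]
  end.

Definition sat (M : htrace) (k : nat) (f : mformula) : Prop :=
  msat (tlen M) (tH M) (tT M) (ttau M) k f.

Definition MHT (G : theory) (M : htrace) : Prop :=
  valid_trace M /\ forall f, G f -> sat M 0 f.

Definition hlt (l : enat) (H T : nat -> {set A}) : Prop :=
  (forall i, lt_enat i l -> H i \subset T i) /\
  exists i, lt_enat i l /\ H i != T i.

Definition MEL (G : theory) (M : htrace) : Prop :=
  MHT G M /\ (forall i, lt_enat i (tlen M) -> tH M i = tT M i) /\
  ~ (exists H', hlt (tlen M) H' (tT M) /\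
        MHT G (HTrace (tlen M) H' (tT M) (ttau M))).

Definition strongly_equivalent (G1 G2 : theory) : Prop :=
  forall D : theory, forall M, MEL (tunion G1 D) M <-> MEL (tunion G2 D) M.

Definition MHT_equivalent (G1 G2 : theory) : Prop :=
  forall M, MHT G1 M <-> MHT G2 M.

End Formulas.

(* Main.v *)
Require Import Defs.
From mathcomp Require Import all_boot.
From Stdlib Require Import Classical.

Lemma lt_enat_le (i j : nat) (l : enat) : i <= j -> lt_enat j l -> lt_enat i l.
Proof. by case: l => [n|] //= hij hj; apply: leq_ltn_trans hij hj. Qed.
Arguments lt_enat_le {i j l}.

Lemma msat_agree (A : finType) (l : enat) (T T' : nat -> {set A}) (tau : nat -> nat)
  (hT : forall i, lt_enat i l -> T i = T' i) (f : mformula A) :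
  forall (H H' : nat -> {set A}) (k : nat), (forall i, lt_enat i l -> H i = H' i) ->
  lt_enat k l -> (msat l H T tau k f <-> msat l H' T' tau k f).
Proof.
induction f as [p| |f1 IH1 f2 IH2|f1 IH1 f2 IH2|f1 IH1 f2 IH2|J g IH
  |J f1 IH1 f2 IH2|J f1 IH1 f2 IH2|J g IH|J f1 IH1 f2 IH2|J f1 IH1 f2 IH2];
  intros H H' k hH hk; simpl.
- by rewrite hH.
- tauto.
- rewrite (IH1 H H' k hH hk) (IH2 H H' k hH hk); tauto.
- rewrite (IH1 H H' k hH hk) (IH2 H H' k hH hk); tauto.
- rewrite (IH1 H H' k hH hk) (IH2 H H' k hH hk) (IH1 T T' k hT hk) (IH2 T T' k hT hk); tauto.
- have hk1 : lt_enat k.-1 l by apply: lt_enat_le hk; apply: leq_pred.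
  rewrite (IH H H' k.-1 hH hk1); tauto.
- split; move=> [j [hj hJ h2 h1]]; exists j; split => //.
  + by apply (IH2 H H' j hH (lt_enat_le hj hk)).
  + move=> i hi hik; apply (IH1 H H' i hH (lt_enat_le hik hk)); auto.
  + by apply (IH2 H H' j hH (lt_enat_le hj hk)).
  + move=> i hi hik; apply (IH1 H H' i hH (lt_enat_le hik hk)); auto.
- split; move=> h j hj hJ; case: (h j hj hJ) => [h2|[i [hi hik h1]]].
  + by left; apply (IH2 H H' j hH (lt_enat_le hj hk)).
  + by right; exists i; split => //; apply (IH1 H H' i hH (lt_enat_le hik hk)).
  + by left; apply (IH2 H H' j hH (lt_enat_le hj hk)).
  + by right; exists i; split => //; apply (IH1 H H' i hH (lt_enat_le hik hk)).
- split; move=> [hl [hg hJ]]; split => //; split => //.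
  + by apply (IH H H' k.+1 hH hl).
  + by apply (IH H H' k.+1 hH hl).
- split; move=> [j [hj hl hJ h2 h1]]; exists j; split => //.
  + by apply (IH2 H H' j hH hl).
  + move=> i hi hij; apply (IH1 H H' i hH (lt_enat_le (ltnW hij) hl)); auto.
  + by apply (IH2 H H' j hH hl).
  + move=> i hi hij; apply (IH1 H H' i hH (lt_enat_le (ltnW hij) hl)); auto.
- split; move=> h j hj hl hJ; case: (h j hj hl hJ) => [h2|[i [hi hij h1]]].
  + by left; apply (IH2 H H' j hH hl).
  + by right; exists i; split => //; apply (IH1 H H' i hH (lt_enat_le (ltnW hij) hl)).
  + by left; apply (IH2 H H' j hH hl).
  + by right; exists i; split => //; apply (IH1 H H' i hH (lt_enat_le (ltnW hij) hl)).
Qed.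

Lemma msat_persist (A : finType) (l : enat) (H T : nat -> {set A}) (tau : nat -> nat)
  (hHT : forall i, lt_enat i l -> H i \subset T i) (f : mformula A) :
  forall k, lt_enat k l -> msat l H T tau k f -> msat l T T tau k f.
Proof.
induction f as [p| |f1 IH1 f2 IH2|f1 IH1 f2 IH2|f1 IH1 f2 IH2|J g IH
  |J f1 IH1 f2 IH2|J f1 IH1 f2 IH2|J g IH|J f1 IH1 f2 IH2|J f1 IH1 f2 IH2];
  intros k hk; simpl.
- by move=> hp; apply: (subsetP (hHT k hk)).
- tauto.
- move=> [a b]; split; [exact: IH1|exact: IH2].
- move=> [a|b]; [left; exact: IH1|right; exact: IH2].
- move=> [_ b]; split; exact b.
- have hk1 : lt_enat k.-1 l by apply: lt_enat_le hk; apply: leq_pred.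
  move=> [a [b c]]; split => //; split => //; exact: IH.
- move=> [j [hj hJ h2 h1]]; exists j; split => //.
  + exact: IH2 (lt_enat_le hj hk) h2.
  + move=> i hi hik; exact: IH1 (lt_enat_le hik hk) (h1 i hi hik).
- move=> h j hj hJ; case: (h j hj hJ) => [h2|[i [hi hik h1]]].
  + by left; exact: IH2 (lt_enat_le hj hk) h2.
  + by right; exists i; split => //; exact: IH1 (lt_enat_le hik hk) h1.
- move=> [hl [hg hJ]]; split => //; split => //; exact: IH.
- move=> [j [hj hl hJ h2 h1]]; exists j; split => //.
  + exact: IH2 hl h2.
  + move=> i hi hij; exact: IH1 (lt_enat_le (ltnW hij) hl) (h1 i hi hij).
- move=> h j hj hl hJ; case: (h j hj hl hJ) => [h2|[i [hi hij h1]]].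
  + by left; exact: IH2 hl h2.
  + by right; exists i; split => //; exact: IH1 (lt_enat_le (ltnW hij) hl) h1.
Qed.

Definition nexts (A : finType) (n : nat) (f : mformula A) : mformula A :=
  iter n (MNext (Intv 0 None)) f.
Arguments nexts {A}.

Lemma nexts_sat (A : finType) (l : enat) (H T : nat -> {set A}) (tau : nat -> nat)
  (f : mformula A) (n : nat) : forall k, lt_enat k l ->
  (msat l H T tau k (nexts n f) <-> lt_enat (k + n) l /\ msat l H T tau (k + n) f).
Proof.
induction n as [|n IHn]; intros k hk.
- rewrite addn0 /=; tauto.
- rewrite /nexts iterS -/(nexts n f) /=.
  split.
  + move=> [hl [hg _]]; have := proj1 (IHn k.+1 hl) hg; by rewrite addSnnS.
  + move=> [hl hg]. have hl1 : lt_enat k.+1 l.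
      by apply: lt_enat_le hl; rewrite -addSnnS leq_addr.
    split => //; split; last by split.
    apply (IHn k.+1 hl1); by rewrite addSnnS.
Qed.

Lemma nexts_atom0 (A : finType) (l : enat) (H T : nat -> {set A}) (tau : nat -> nat)
  (p : A) (n : nat) : lt_enat 0 l ->
  (msat l H T tau 0 (nexts n (MAtom p)) <-> lt_enat n l /\ p \in H n).
Proof. move=> h0; have := @nexts_sat A l H T tau (MAtom p) n 0 h0; by rewrite add0n. Qed.

Arguments msat_persist {A l H T tau} hHT f {k}.
Arguments msat_agree {A l T T' tau} hT f H H' k.
Arguments nexts_atom0 {A l H T tau p n}.

Lemma key (A : finType) (G1 G2 : theory A) :
  strongly_equivalent G1 G2 -> forall M, MHT G1 M -> MHT G2 M.
Proof.
move=> hSE [l H T tau] [hv hG1].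
case: hv => /= h0 hHT htau0 htau.
apply: NNPP => hn2.
pose TT := HTrace l T T tau.
have vTT : valid_trace TT by split.
have MT1 : MHT G1 TT.
  split => // f hf; move: (hG1 f hf); rewrite /sat /TT /=; exact: (msat_persist hHT f h0).
case: (classic (MHT G2 TT)) => hT2.
- pose D := fun f : mformula A =>
    (exists i p, [/\ lt_enat i l, p \in H i & f = nexts i (MAtom p)]) \/
    (exists i p j q, [/\ lt_enat i l, lt_enat j l, p \in T i :\: H i,
        q \in T j :\: H j & f = MImp (nexts i (MAtom p)) (nexts j (MAtom q))]).
  have hMEL2 : MEL (tunion G2 D) TT.
    split; [split=> // f [hf|hf]|split=> //].
    + exact: (proj2 hT2).
    + case: hf => [[i [p [hi hp ->]]]|[i [p [j [q [hi hj hp hq ->]]]]]].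
      * apply (nexts_atom0 h0); split => //; exact: subsetP (hHT i hi) p hp.
      * rewrite /sat /=; split => _; apply (nexts_atom0 h0); split => //;
          by move: hq; rewrite inE => /andP[].
    + move=> [H' [[hsub [i0 [hi0 hne]]] [hv' hG']]].
      have hD : forall f, D f -> sat (HTrace l H' T tau) 0 f.
        by move=> f hf; apply hG'; right.
      have hHH' : forall i, lt_enat i l -> H i \subset H' i.
        move=> i hi; apply/subsetP => p hp.
        have hf : D (nexts i (MAtom p)) by left; exists i, p; split.
        by move: (hD _ hf) => /(nexts_atom0 h0) [].
      case: (classic (exists i p, lt_enat i l /\ p \in H' i :\: H i)).
      * move=> [i [p [hi hp]]]; apply: (negP hne).
        rewrite eqEsubset hsub //=; apply/subsetP => q hq.
        case hqH: (q \in H i0); first exact: (subsetP (hHH' i0 hi0) q hqH).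
        move: hp; rewrite inE => /andP[hp1 hp2].
        have hpT : p \in T i :\: H i by rewrite inE hp1 /=; exact: (subsetP (hsub i hi) p hp2).
        have hqT : q \in T i0 :\: H i0 by rewrite inE hqH hq.
        have hf : D (MImp (nexts i (MAtom p)) (nexts i0 (MAtom q))).
          by right; exists i, p, i0, q; split.
        move: (hD _ hf) => [himp _].
        have hpi : msat l H' T tau 0 (nexts i (MAtom p)).
          by apply (nexts_atom0 h0); split.
        by move: (himp hpi) => /(nexts_atom0 h0) [].
      * move=> hno; apply: hn2.
        have hag : forall i, lt_enat i l -> H' i = H i.
          move=> i hi; apply/eqP; rewrite eqEsubset hHH' // andbT.
          apply/subsetP => p hp; case hpH: (p \in H i) => //.
          exfalso; apply: hno; exists i, p; split => //; by rewrite inE hpH hp.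
        split; first by split.
        move=> f hf; have := hG' f (or_introl hf); rewrite /sat /=.
        exact: (proj1 (msat_agree (fun i _ => erefl) f H' H 0 hag h0)).
  have := proj2 (hSE D TT) hMEL2; move=> [_ [_ hno]]; apply: hno.
  exists H; split.
  + split => //; apply: NNPP => hall; apply: hn2.
    have hag : forall i, lt_enat i l -> T i = H i.
      move=> i hi; apply/eqP; rewrite eq_sym; apply: NNPP => hne; apply: hall; exists i; split => //; exact/negP.
    split; first by split.
    move=> f hf; have := proj2 hT2 f hf; rewrite /sat /=.
    exact: (proj1 (msat_agree (fun i _ => erefl) f T H 0 hag h0)).
  + split; first by split.
    move=> f [hf|hf]; first exact: hG1.
    case: hf => [[i [p [hi hp ->]]]|[i [p [j [q [hi hj hp hq ->]]]]]].
    * by apply (nexts_atom0 h0); split.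
    * rewrite /sat /=; split => hpi.
      - move: hpi => /(nexts_atom0 h0) [_ hpH].
        by move: hp; rewrite inE hpH.
      - apply (nexts_atom0 h0); split => //;
          by move: hq; rewrite inE => /andP[].
- pose D := fun f : mformula A =>
    exists i p, [/\ lt_enat i l, p \in T i & f = nexts i (MAtom p)].
  have hMEL1 : MEL (tunion G1 D) TT.
    split; [split=> // f [hf|hf]|split=> //].
    + exact: (proj2 MT1).
    + case: hf => [i [p [hi hp ->]]].
      by apply (nexts_atom0 h0); split.
    + move=> [H' [[hsub [i0 [hi0 hne]]] [hv' hG']]].
      apply: (negP hne); rewrite eqEsubset hsub //=; apply/subsetP => q hq.
      have hf : D (nexts i0 (MAtom q)) by exists i0, q; split.
      by move: (hG' _ (or_intror hf)) => /(nexts_atom0 h0) [].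
  have := proj1 (hSE D TT) hMEL1; move=> [[_ h2] _]; apply: hT2.
  split => // f hf; apply: h2; by left.
Qed.

Theorem theorem4 (A : finType) (G1 G2 : theory A) :
  strongly_equivalent G1 G2 <-> MHT_equivalent G1 G2.
Proof.
split.
- move=> hSE M; split; first exact: key.
  apply: key => D N; exact: iff_sym (hSE D N).
- move=> hE D M.
  have hU : forall N, MHT (tunion G1 D) N <-> MHT (tunion G2 D) N.
    move=> N; split; move=> [hv hf]; split => // f [h|h]; try (by apply hf; right).
    + by apply (proj1 (hE N) (conj hv (fun g hg => hf g (or_introl hg)))).
    + by apply (proj2 (hE N) (conj hv (fun g hg => hf g (or_introl hg)))).
  rewrite /MEL; split; move=> [h1 [h2 h3]]; split.
  + exact (proj1 (hU M) h1).
  + split => // [[H' [h4 h5]]]; apply: h3; exists H'; split => //; exact (proj2 (hU _) h5).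
  + exact (proj2 (hU M) h1).
  + split => // [[H' [h4 h5]]]; apply: h3; exists H'; split => //; exact (proj1 (hU _) h5).
Qed.
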